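(* Let $p\in(0,1)$ and $N=1/(1-p)$. For integers $s\ge0$ and $r\ge0$, $$F_s(r)\le p^{r/2}\,N^s\,4^s .$$
   Context: For $L\in\mathbb N$ and $j\in\mathbb Z$ define the chain functions $F_0(j)=p^{|j|}$ and, for $L\ge1$, $$F_L(j)=\sum_{j_1,\dots,j_L\in\mathbb Z}p^{|j-j_1|+|j_1-j_2|+\cdots+|j_{L-1}-j_L|+|j_L|}.$$ *)

(* Defs.v *)
From HB Require Import structures.
From mathcomp Require Import all_boot all_order all_algebra.
From mathcomp Require Import all_classical all_reals all_analysis.
Set Implicit Arguments. Unset Strict Implicit. Unset Printing Implicit Defensive.
Import Order.TTheory GRing.Theory Num.Theory.
Local Open Scope classical_set_scope.
Local Open Scope ring_scope.

(* exponent |j - j1| + |j1 - j2| + ... + |j_{L-1} - j_L| + |j_L|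
   for the chain j, j1, ..., jL, 0 ; for L = 0 (s = [::]) this is |j|. *)
Definition chain_exp (j : int) (s : seq int) : nat :=
  sumn (pairmap (fun a b : int => `|a - b|%N) j (rcons s 0)).

(* F_L(j) = sum over (j1,...,jL) in Z^L of p^{chain_exp}, as an
   extended-real sum of nonnegative terms (possibly +oo a priori). *)
Definition F (R : realType) (p : R) (L : nat) (j : int) : \bar R :=
  (\esum_(t in [set: L.-tuple int]) ((p ^+ chain_exp j (tval t))%:E))%R.

(* Main.v *)
Require Import Defs.
From HB Require Import structures.
From mathcomp Require Import all_boot all_order all_algebra.
From mathcomp Require Import all_classical all_reals all_analysis.
From mathcomp Require Import ring lra zify.
Import Order.TTheory GRing.Theory Num.Theory.
Local Open Scope ring_scope.

Lemma chain_cons (j h : int) (s : seq int) :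
  chain_exp j (h :: s) = (`|j - h|%N + chain_exp h s)%N.
Proof. by []. Qed.

Lemma chain_ge (j : int) (s : seq int) : (`|j|%N <= chain_exp j s)%N.
Proof.
elim: s j => [|h s IH] j; first by rewrite /chain_exp /= subr0 addn0.
rewrite chain_cons; have := leqD_dist j h 0; rewrite !subr0 => /leq_trans; apply.
by rewrite leq_add2l.
Qed.

Lemma geo_partial (R : realType) (q : R) (k : nat) :
  (1 - q) * \sum_(n <- iota 0 k) q ^+ n = 1 - q ^+ k.
Proof.
elim: k => [|k IH]; first by rewrite big_nil mulr0 expr0 subrr.
rewrite -addn1 iotaD big_cat /= big_seq1 mulrDr IH add0n addn1 exprS; ring.
Qed.

Lemma geo_seq (R : realType) (q : R) : 0 <= q -> q < 1 ->
  forall S : seq nat, uniq S -> \sum_(n <- S) q ^+ n <= (1 - q)^-1.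
Proof.
move=> q0 q1 S uS.
set m := (\max_(n <- S) n).+1.
have Sm : {subset S <= iota 0 m}.
  by move=> x xS; rewrite mem_iota /= add0n ltnS; exact: (leq_bigmax_seq x xS).
have pe : perm_eq S [seq n <- iota 0 m | n \in S].
  apply: uniq_perm => //; first by rewrite filter_uniq // iota_uniq.
  by move=> x; rewrite mem_filter; case xS: (x \in S) => //=; rewrite Sm.
rewrite (perm_big _ pe) big_filter.
apply: (@le_trans _ _ (\sum_(n <- iota 0 m) q ^+ n)).
  rewrite [X in _ <= X](bigID (fun n => n \in S)) /= lerDl.
  by apply: sumr_ge0 => i _; exact: exprn_ge0.
have q1' : 1 - q != 0 by rewrite subr_eq0 eq_sym lt_eqF.
have -> : \sum_(n <- iota 0 m) q ^+ n
   = (1 - q)^-1 * ((1 - q) * \sum_(n <- iota 0 m) q ^+ n).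
  by rewrite mulrA mulVf // mul1r.
rewrite geo_partial -[X in _ <= X]mulr1 ler_wpM2l //.
  by rewrite invr_ge0 subr_ge0 ltW.
have := exprn_ge0 m q0; lra.
Qed.

Lemma geo_int (R : realType) (q : R) : 0 <= q -> q < 1 ->
  forall (j : int) (H : seq int), uniq H ->
  \sum_(h <- H) q ^+ `|j - h|%N <= 2 * (1 - q)^-1.
Proof.
move=> q0 q1 j H uH.
rewrite (bigID (fun h => j <= h)) /= mulr2n mulrDl mul1r.
have key : forall P : pred int, (forall h h', P h -> P h' -> (j <= h) = (j <= h')) ->
  \sum_(h <- H | P h) q ^+ `|j - h|%N <= (1 - q)^-1.
  move=> P HP.
  rewrite -big_filter.
  rewrite -(big_map (fun h => `|j - h|%N) xpredT (fun n => q ^+ n)).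
  apply: geo_seq => //.
  rewrite map_inj_in_uniq; first by rewrite filter_uniq.
  move=> h h'; rewrite !mem_filter => /andP[Ph _] /andP[Ph' _] e.
  have := HP _ _ Ph Ph'; lia.
apply: lerD; apply: key => h h' /=.
  by move=> -> ->.
by move=> /negbTE -> /negbTE ->.
Qed.

Lemma main_fin (R : realType) (q : R) : 0 <= q -> q < 1 ->
  forall (s : nat) (j : int) (A : seq (seq int)), uniq A ->
  all (fun t => size t == s) A ->
  \sum_(t <- A) q ^+ chain_exp j t <= (2 * (1 - q)^-1) ^+ s.
Proof.
move=> q0 q1 s; elim: s => [|s IH] j A uA sA.
  case: A uA sA => [|t A] uA sA; first by rewrite big_nil expr0.
  move: sA => /= /andP[/eqP/size0nil tE sA].
  case: A uA sA => [|t' A] uA sA.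
    by rewrite tE big_seq1 expr0; apply: exprn_ile1 => //; exact: ltW.
  move: sA => /= /andP[/eqP/size0nil t'E _].
  by move: uA; rewrite tE t'E.
set H := undup [seq head 0 t | t <- A].
have step1 : \sum_(t <- A) q ^+ chain_exp j t =
    \sum_(h <- H) \sum_(t <- A | h == head 0 t) q ^+ chain_exp j t.
  rewrite [RHS](exchange_big_dep xpredT) //=.
  rewrite big_seq [RHS]big_seq; apply: eq_bigr => u uA'.
  rewrite -big_filter.
  have -> : [seq h <- H | h == head 0 u] = [:: head 0 u].
    apply: filter_pred1_uniq; first exact: undup_uniq.
    by rewrite mem_undup; apply: map_f.
  by rewrite big_seq1.
rewrite step1.
have C0 : 0 <= 2 * (1 - q)^-1 by rewrite mulr_ge0 // invr_ge0 subr_ge0 ltW.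
apply: (@le_trans _ _ (\sum_(h <- H) q ^+ `|j - h|%N * (2 * (1 - q)^-1) ^+ s)).
  rewrite big_seq [X in _ <= X]big_seq; apply: ler_sum => h hH.
  have -> : \sum_(t <- A | h == head 0 t) q ^+ chain_exp j t =
     q ^+ `|j - h|%N * \sum_(u <- [seq behead t | t <- A & h == head 0 t])
        q ^+ chain_exp h u.
    rewrite big_map big_filter mulr_sumr big_seq_cond [RHS]big_seq_cond.
    apply: eq_bigr => t /andP[tA /eqP ->].
    have : size t == s.+1 by move/allP: sA => /(_ t tA).
    by case: t {tA} => [|a u] //= _; rewrite chain_cons exprD.
  rewrite ler_wpM2l ?exprn_ge0 //; apply: IH.
    rewrite map_inj_in_uniq ?filter_uniq //.
    move=> t t'; rewrite !mem_filter => /andP[/eqP ht tA] /andP[/eqP ht' tA'] e.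
    have st := allP sA t tA; have st' := allP sA t' tA'.
    move: st st' ht ht' e.
    by case: t {tA} => [|a u]; case: t' {tA'} => [|a' u'] //= _ _ <- <- ->.
  apply/allP => u /mapP [t]; rewrite mem_filter => /andP[_ tA] ->.
  by rewrite size_behead; have := allP sA t tA => /eqP ->.
rewrite -mulr_suml exprS; apply: (ler_wpM2r (exprn_ge0 _ C0)).
by apply: geo_int => //; exact: undup_uniq.
Qed.

Theorem lemma9 (R : realType) (p : R) (hp0 : 0 < p) (hp1 : p < 1)
  (s r : nat) :
  (F p s r%:Z <= (p `^ (r%:R / 2) * (1 / (1 - p)) ^+ s * 4 ^+ s)%:E)%E.
Proof.
set q := Num.sqrt p.
have q0 : 0 <= q by exact: sqrtr_ge0.
have qp : q ^+ 2 = p by rewrite sqr_sqrtr // ltW.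
have q1 : q < 1 by nra.
have C0 : 0 <= 2 * (1 - q)^-1 by rewrite mulr_ge0 // invr_ge0 subr_ge0 ltW.
have pr : p `^ (r%:R / 2) = q ^+ r.
  by rewrite mulrC powRrM powR12_sqrt ?ltW // powR_mulrn.
rewrite /F /esum; apply: ge_ereal_sup => _ [X [finX _] <-].
rewrite fsbig_finite //=.
rewrite -(big_map (fun t : s.-tuple int => tval t) xpredT
   (fun u => (p ^+ chain_exp r u)%:E)).
rewrite sumEFin lee_fin.
set A := map _ _.
have uA : uniq A.
  rewrite map_inj_uniq; first exact: finmap.fset_uniq.
  by move=> x y; apply: val_inj.
have sA : all (fun t => size t == s) A.
  by apply/allP => u /mapP [t _ ->]; rewrite size_tuple.
apply: (@le_trans _ _ (\sum_(u <- A) q ^+ r * q ^+ chain_exp r u)).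
  apply: ler_sum => u _.
  rewrite -qp -exprM mulnC exprM expr2.
  apply: ler_wpM2r; first exact: exprn_ge0.
  apply: ler_wiXn2l => //; first exact: ltW.
  exact: (chain_ge r u).
rewrite -mulr_sumr pr -mulrA -exprMn.
apply: ler_wpM2l; first exact: exprn_ge0.
apply: (@le_trans _ _ ((2 * (1 - q)^-1) ^+ s)); first exact: main_fin.
apply: lerXn2r; rewrite ?inE //.
  by rewrite nnegrE mulr_ge0 // div1r invr_ge0 subr_ge0 ltW.
rewrite -qp.
have e : 1 / (1 - q ^+ 2) * 4 = (2 * (1 - q)^-1) * (2 / (1 + q)).
  field; apply/and3P; split; rewrite gt_eqF //; [lra | lra | rewrite qp; lra].
rewrite e; apply: ler_peMr => //.
rewrite ler_pdivlMr; last by lra.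
lra.
Qed.
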